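(* Let $(\mathbf{P},d_{\mathbf{P}})$ be a finite metric poset. (1) For nonnegative bounded complexes $E_\bullet,F_\bullet$ of projective $\mathbf{P}$-modules (with fixed decompositions of their terms into indecomposables), the following are equivalent: (a) $\mathrm{dist}'_{\mathrm{R}}(E_\bullet,F_\bullet)=0$; (b) there is a pre-matching $B$ of $(E_\bullet,F_\bullet)$ with $\mathrm{cost}(B)=0$; (c) $[E_\bullet]=[F_\bullet]$. (2) For $\mathbf{P}$-modules $M,N$ with minimal projective resolutions $P^M_\bullet,P^N_\bullet$, the following are equivalent: (a) $\mathrm{dist}'_{\mathrm{B}}(P^M_\bullet,P^N_\bullet)=0$; (b) there exist a projective resolution $E_\bullet$ of $M$ and $F_\bullet$ of $N$ with $|E_i|=|F_i|$ for all $i$ and a pre-matching $B$ of $(E_\bullet,F_\bullet)$ with $\mathrm{cost}(B)=0$; (c) $[P^M_\bullet]-[P^N_\bullet]$ lies in the subgroup of $K_{\mathrm{prj}}(\mathbf{P})^{(\mathbb{N})}$ generated by the elements $[\mathrm{Cone}(\mathrm{id}_{k[\mathbf{P}]_x})[i]]$, $x\in\mathbf{P}$, $i\in\mathbb{N}$; (d) $\hat{\alpha}([P^M_\bullet])=\hat{\alpha}([P^N_\bullet])$. In particular, if $\mathrm{dist}_{\mathrm{B}}(P^M_\bullet,P^N_\bullet)=0$, then $\hat{\alpha}([P^M_\bullet])=\hat{\alpha}([P^N_\bullet])$.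
   Context: Fix a field $k$; a $\mathbf{P}$-module is a functor from the finite poset $\mathbf{P}$ (as a category) to finite-dimensional $k$-vector spaces. For $x\in\mathbf{P}$, $k[\mathbf{P}]_x$ is the module with value $k$ at $y\ge x$, $0$ elsewhere, identity maps; these are the indecomposable projectives. $K_{\mathrm{prj}}(\mathbf{P})$ is the split Grothendieck group of projective $\mathbf{P}$-modules (free on $[k[\mathbf{P}]_x]$); for a nonnegative bounded complex $E_\bullet=(E_i)_{i\in\mathbb{N}}$ of projectives, $[E_\bullet]=([E_i])_{i\in\mathbb{N}}\in K_{\mathrm{prj}}(\mathbf{P})^{(\mathbb{N})}$ (finitely supported sequences); $\hat{\alpha}((A_i)_i)=\sum_i(-1)^iA_i$. $\mathrm{Cone}(\mathrm{id}_E)[a]$ is the complex with $E$ in degrees $a+1$ and $a$ joined by $\mathrm{id}_E$, zero elsewhere. Each term $E_i$ is a direct sum $\bigoplus_{x\in\mathrm{smd}(E_i)}k[\mathbf{P}]_x$ with a fixed decomposition ($\mathrm{smd}$ = indexed multiset of indices), $|E_i|$ its number of summands. For $y\le x$ let $\rho(x\ge y):k[\mathbf{P}]_x\to k[\mathbf{P}]_y$ be the canonical morphism (identity at each $z\ge x$), $\rho(x\ge y)=0$ otherwise; a morphism between decomposed projectives is uniquely $[a_{x,y}\rho(x\ge y)]$ with $a_{x,y}=0$ unless $x\ge y$, and $\mathrm{Mat}$ is $[a_{x,y}]$. A pre-matching of $(E_\bullet,F_\bullet)$ is a family of bijections $B_i:\mathrm{smd}(E_i)\to\mathrm{smd}(F_i)$,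 $i\ge0$; its cost is $\sup\{d_{\mathbf{P}}(x,B_i(x))\mid i,x\in\mathrm{smd}(E_i)\}$. A matching is a pre-matching such that the $(x',x)$-entry of $\mathrm{Mat}(\partial^E_i)$ equals the $(B_{i+1}(x'),B_i(x))$-entry of $\mathrm{Mat}(\partial^F_i)$ for all $i$, $x\in\mathrm{smd}(E_i)$, $x'\in\mathrm{smd}(E_{i+1})$. $\mathrm{dist}'_{\mathrm{R}}(E_\bullet,F_\bullet)$ (resp. $\mathrm{dist}_{\mathrm{R}}$) is the infimum of costs of pre-matchings (resp. matchings), $\infty$ if none. For $\mathbf{P}$-modules, with $\mathsf{Res}(P^M_\bullet,P^N_\bullet)$ the set of pairs $(E_\bullet,F_\bullet)$ of projective resolutions of $M$ and $N$ with $|E_i|=|F_i|$ for all $i$, $\mathrm{dist}'_{\mathrm{B}}(P^M_\bullet,P^N_\bullet)$ (resp. $\mathrm{dist}_{\mathrm{B}}$) is the infimum of $\mathrm{dist}'_{\mathrm{R}}$ (resp. $\mathrm{dist}_{\mathrm{R}}$) over $\mathsf{Res}(P^M_\bullet,P^N_\bullet)$, $\infty$ if empty. *)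

(* Defs.v *)
From HB Require Import structures.
From mathcomp Require Import all_boot all_order all_algebra.
From mathcomp Require Import boolp classical_sets reals constructive_ereal ereal.
Set Implicit Arguments.
Unset Strict Implicit.
Unset Printing Implicit Defensive.
Import Order.TTheory GRing.Theory Num.Theory.
Local Open Scope ring_scope.

Section PosetModules.
Variables (disp : Order.disp_t) (T : finPOrderType disp) (k : fieldType).

(* A (finite-dimensional) P-module: a functor from the poset T to
   finite-dimensional k-vector spaces k^(pdim x).  Linear maps act on row
   vectors: v |-> v *m pmap x y. *)
Record Pmodule := {
  pdim : T -> nat;
  pmap : forall x y : T, 'M[k]_(pdim x, pdim y);
  pmap_id : forall x, pmap x x = 1%:M;
  pmap_comp : forall x y z, (x <= y)%O -> (y <= z)%O ->
                pmap x y *m pmap y z = pmap x z;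
  pmap_junk : forall x y, ~~ (x <= y)%O -> pmap x y = 0 }.

(* A nonnegative bounded complex of projective P-modules with fixed
   decompositions:  E_i = (+)_{x in smd i} k[P]_x, differential
   d_i : E_{i+1} -> E_i given by Mat(d_i) = dif i, whose (x',x)-entry is the
   coefficient of rho(x' >= x); it vanishes unless x' >= x. *)
Record pcomplex := {
  clen : nat;
  smd : nat -> seq T;
  dif : forall i, 'M[k]_(size (smd i.+1), size (smd i));
  smd_bounded : forall i, (clen <= i)%N -> smd i = [::];
  dif_supp : forall i (j' : 'I_(size (smd i.+1))) (j : 'I_(size (smd i))),
      dif i j' j != 0 ->
      (tnth (in_tuple (smd i)) j <= tnth (in_tuple (smd i.+1)) j')%O;
  dif_sq : forall i, dif i.+1 *m dif i = 0 }.

Definition sm (E : pcomplex) i (j : 'I_(size (smd E i))) : T :=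
  tnth (in_tuple (smd E i)) j.

(* E_i evaluated at z: the coordinate subspace spanned by the summands
   k[P]_x with x <= z (row space of this diagonal 0/1 matrix). *)
Definition mask (E : pcomplex) i (z : T) : 'M[k]_(size (smd E i)) :=
  diag_mx (\row_j (if (sm j <= z)%O then 1 else 0)).

(* The augmentation E_0 -> M determined (Yoneda) by vectors v_j in M(x_j),
   evaluated at z. *)
Definition aug_at (E : pcomplex) (M : Pmodule)
    (v : forall j : 'I_(size (smd E 0)), 'rV[k]_(pdim M (sm j))) (z : T) :
    'M[k]_(size (smd E 0), pdim M z) :=
  \matrix_(j < size (smd E 0), c < pdim M z)
     (if (sm j <= z)%O then (v j *m pmap M (sm j) z) 0 c else 0).

Definition is_resolution (E : pcomplex) (M : Pmodule) : Prop :=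
  exists v : forall j : 'I_(size (smd E 0)), 'rV[k]_(pdim M (sm j)),
  forall z : T,
  [/\ row_full (mask E 0 z *m aug_at v z),
      (mask E 1 z *m dif E 0 == kermx (aug_at v z) :&: mask E 0 z)%MS &
      forall i, (mask E i.+2 z *m dif E i.+1 == kermx (dif E i) :&: mask E i.+1 z)%MS].

(* minimality: every differential lands in the radical, i.e. no component
   rho(x >= x) with nonzero coefficient *)
Definition minimal (E : pcomplex) : Prop :=
  forall i (j' : 'I_(size (smd E i.+1))) (j : 'I_(size (smd E i))),
    sm j' = sm j -> dif E i j' j = 0.

Definition is_min_resolution (E : pcomplex) (M : Pmodule) : Prop :=
  is_resolution E M /\ minimal E.

Definition prematching (E F : pcomplex) :=
  forall i, 'I_(size (smd E i)) -> 'I_(size (smd F i)).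

Definition is_prematching E F (B : prematching E F) : Prop :=
  forall i, bijective (B i).

Definition is_matching E F (B : prematching E F) : Prop :=
  is_prematching B /\
  forall i (j' : 'I_(size (smd E i.+1))) (j : 'I_(size (smd E i))),
    dif E i j' j = dif F i (B i.+1 j') (B i j).

Variable R : realType.

Definition is_metric (d : T -> T -> R) : Prop :=
  [/\ forall x y, d x y = 0 <-> x = y,
      forall x y, d x y = d y x &
      forall x y z, (d x z <= d x y + d y z)%R].

Variable d : T -> T -> R.

(* cost = sup of d(x, B_i(x)); all terms vanish for i >= clen E *)
Definition cost E F (B : prematching E F) : R :=
  \big[Num.max/0%R]_(i < clen E)
     \big[Num.max/0%R]_(j < size (smd E i)) d (sm j) (sm (B i j)).

Local Open Scope classical_set_scope.

Definition distR' (E F : pcomplex) : \bar R :=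
  ereal_inf [set (cost B)%:E | B in [set B : prematching E F | is_prematching B]].

Definition distR (E F : pcomplex) : \bar R :=
  ereal_inf [set (cost B)%:E | B in [set B : prematching E F | is_matching B]].

Definition Res (M N : Pmodule) : set (pcomplex * pcomplex) :=
  [set EF | [/\ is_resolution EF.1 M, is_resolution EF.2 N &
             forall i, size (smd EF.1 i) = size (smd EF.2 i)]].

Definition distB' (M N : Pmodule) : \bar R :=
  ereal_inf [set distR' EF.1 EF.2 | EF in Res M N].

Definition distB (M N : Pmodule) : \bar R :=
  ereal_inf [set distR EF.1 EF.2 | EF in Res M N].

End PosetModules.

Section Kgroup.
Variables (disp : Order.disp_t) (T : finPOrderType disp) (k : fieldType).

(* K_prj(P)^(N) is modelled as finitely supported maps nat -> (T -> int)
   (K_prj(P) being free on the [k[P]_x], x in T). *)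
Definition cls (E : pcomplex T k) : nat -> T -> int :=
  fun i x => (count_mem x (smd E i))%:Z.

(* [Cone(id_{k[P]_x})[a]] : k[P]_x in degrees a and a+1 *)
Definition cone_cls (x : T) (a : nat) : nat -> T -> int :=
  fun i y => ((y == x) && ((i == a) || (i == a.+1)))%:Z.

Definition alpha_hat (E : pcomplex T k) : T -> int :=
  fun x => (\sum_(i < clen E) (-1) ^+ i * cls E i x)%R.

Definition in_cone_subgroup (f : nat -> T -> int) : Prop :=
  exists l : seq (int * (T * nat)),
    f = (fun i y => \sum_(p <- l) p.1 * cone_cls p.2.1 p.2.2 i y)%R.

End Kgroup.

(* Main.v *)
Require Import Defs.
From HB Require Import structures.
From mathcomp Require Import all_boot all_order all_algebra.
From mathcomp Require Import boolp classical_sets reals constructive_ereal ereal.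
From mathcomp Require Import perm ring lra zify.
Set Implicit Arguments. Unset Strict Implicit. Unset Printing Implicit Defensive.
Import Order.TTheory GRing.Theory Num.Theory.

Section Mx.
Variables (disp : Order.disp_t) (T : finPOrderType disp) (k : fieldType).
Local Open Scope ring_scope.

Definition dmask (s : seq T) (z : T) : 'M[k]_(size s) :=
  diag_mx (\row_j (if (tnth (in_tuple s) j <= z)%O then 1 else 0)).

Lemma mask_dmask (E : pcomplex T k) i z : Defs.mask E i z = dmask (smd E i) z.
Proof. by []. Qed.

Definition cmx (x z : T) : 'M[k]_1 := (if (x <= z)%O then 1 else 0)%:M.

Lemma tnth_cons (x : T) (s : seq T) (i : 'I_(size (x :: s))) (i' : 'I_(size s)) :
  (i : nat) = (1 + i')%N -> tnth (in_tuple (x :: s)) i = tnth (in_tuple s) i'.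
Proof. by move=> hi; rewrite !(tnth_nth x) /= hi. Qed.

Lemma tnth_cons0 (x : T) (s : seq T) (i : 'I_(size (x :: s))) :
  (i : nat) = 0%N -> tnth (in_tuple (x :: s)) i = x.
Proof. by move=> hi; rewrite !(tnth_nth x) /= hi. Qed.

Lemma dmask_cons (x : T) (s : seq T) (z : T) :
  dmask (x :: s) z = block_mx (cmx x z) 0 0 (dmask s z) :> 'M_(1 + size s).
Proof.
apply/matrixP => i j; rewrite /dmask /cmx !mxE.
case: (splitP i) => i' hi; rewrite !mxE; case: (splitP j) => j' hj; rewrite !mxE.
- have hi0 : (i : nat) = 0%N by rewrite hi ord1.
  rewrite (tnth_cons0 hi0) !ord1 eqxx /=.
  have -> : i == j by apply/eqP/val_inj; rewrite /= hi hj !ord1.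
  by [].
- have -> : (i == j) = false by apply/negbTE; rewrite -val_eqE /= hi hj !ord1.
  by rewrite mulr0n.
- have -> : (i == j) = false by apply/negbTE; rewrite -val_eqE /= hi hj !ord1.
  by rewrite mulr0n.
- rewrite (tnth_cons hi).
  have -> : (i == j) = (i' == j') by rewrite -val_eqE /= hi hj -val_eqE /= eqn_add2l.
  by [].
Qed.

Lemma rank_dmask (s : seq T) (z : T) : \rank (dmask s z) = count (fun x => (x <= z)%O) s.
Proof.
elim: s => [|x s IH]; first by rewrite /= flatmx0 mxrank0.
have := rank_diag_block_mx (cmx x z) (dmask s z).
rewrite -dmask_cons => ->; rewrite IH /= /cmx.
case: (x <= z)%O => /=; first by rewrite mxrank1.
by rewrite (_ : 0%:M = 0) ?mxrank0 //; apply/matrixP => ? ?; rewrite !mxE mul0rn.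
Qed.


Lemma exact_rank (m n p : nat) (V1 : 'M[k]_m) (A : 'M_(m,n)) (V0 : 'M_n) (B : 'M_(n,p)) :
  (V1 *m A <= V0)%MS -> V1 *m A *m B = 0 ->
  (V1 *m A == kermx B :&: V0)%MS = (\rank (V1 *m A) + \rank (V0 *m B) == \rank V0)%N.
Proof.
move=> sub0 z0.
have sub : (V1 *m A <= kermx B :&: V0)%MS by rewrite sub_capmx sub_kermx z0 eqxx sub0.
rewrite -(mxrank_leqif_eq sub).2 capmxC -(mxrank_mul_ker V0 B).
by rewrite [(\rank (V0 *m B) + _)%N]addnC eqn_add2r.
Qed.

Lemma supp_mask (E : pcomplex T k) i z :
  (Defs.mask E i.+1 z *m dif E i <= Defs.mask E i z)%MS.
Proof.
suff h : Defs.mask E i.+1 z *m dif E i *m Defs.mask E i z = Defs.mask E i.+1 z *m dif E i.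
  by rewrite -h submxMl.
rewrite /Defs.mask mul_mx_diag mul_diag_mx; apply/matrixP => a b; rewrite !mxE.
have [->|nz] := eqVneq (dif E i a b) 0; first by rewrite !mulr0 mul0r.
have le := dif_supp nz.
case: ifP => ha; last by rewrite !mul0r.
by rewrite (le_trans le ha) mulr1.
Qed.

Lemma sq_mask (E : pcomplex T k) i z :
  Defs.mask E i.+2 z *m dif E i.+1 *m dif E i = 0.
Proof. by rewrite -mulmxA dif_sq mulmx0. Qed.

Definition nn (E : pcomplex T k) i z := \rank (Defs.mask E i z).
Definition rr (E : pcomplex T k) i z := \rank (Defs.mask E i.+1 z *m dif E i).

Lemma res_iff (E : pcomplex T k) (M : Pmodule T k)
  (v : forall j : 'I_(size (smd E 0)), 'rV[k]_(pdim M (Defs.sm j))) z :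
  [/\ row_full (Defs.mask E 0 z *m aug_at v z),
      (Defs.mask E 1 z *m dif E 0 == kermx (aug_at v z) :&: Defs.mask E 0 z)%MS &
      forall i, (Defs.mask E i.+2 z *m dif E i.+1 == kermx (dif E i) :&: Defs.mask E i.+1 z)%MS]
  <->
  [/\ \rank (Defs.mask E 0 z *m aug_at v z) = pdim M z,
      Defs.mask E 1 z *m dif E 0 *m aug_at v z = 0,
      (rr E 0 z + \rank (Defs.mask E 0 z *m aug_at v z) = nn E 0 z)%N &
      forall i, (rr E i.+1 z + rr E i z = nn E i.+1 z)%N].
Proof.
split.
- case=> h1 h2 h3.
  have z0 : Defs.mask E 1 z *m dif E 0 *m aug_at v z = 0.
    by apply/eqP; rewrite -sub_kermx; move/andP: h2 => [h2 _]; apply: submx_trans h2 _; apply: capmxSl.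
  split => //; first by apply/eqP.
  + by apply/eqP; rewrite /rr /nn -exact_rank // supp_mask.
  + by move=> i; apply/eqP; rewrite /rr /nn -exact_rank ?supp_mask ?sq_mask.
- case=> h1 h2 h3 h4; split; first by apply/eqP.
  + by rewrite exact_rank ?supp_mask //; apply/eqP.
  + by move=> i; rewrite exact_rank ?supp_mask ?sq_mask //; apply/eqP; exact: h4.
Qed.

Lemma euler (nf rf : nat -> nat) (D : nat) N :
  (rf 0 + D = nf 0)%N -> (forall i, rf i.+1 + rf i = nf i.+1)%N ->
  (\sum_(i < N.+1) (-1) ^+ i * (nf i)%:Z = D%:Z + (-1) ^+ N * (rf N)%:Z :> int)%R.
Proof.
move=> h0 hS; elim: N => [|N IH].
  by rewrite big_ord_recr big_ord0 /= add0r expr0 !mul1r -h0 PoszD addrC.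
  rewrite big_ord_recr /= IH -hS PoszD exprS; ring.
Qed.

Lemma count_sum_mem (s : seq T) z :
  (count (fun x => (x <= z)%O) s)%:Z = (\sum_(y : T | (y <= z)%O) (count_mem y s)%:Z)%R.
Proof.
elim: s => [|x s IH]; first by rewrite big1.
rewrite /= PoszD IH.
under [in RHS]eq_bigr => y _ do rewrite PoszD.
rewrite big_split /=; congr (_ + _).
case: (boolP (x <= z)%O) => h.
  rewrite (bigD1 x) //= eqxx big1 ?addr0 // => y /andP[_ hy].
  by rewrite eq_sym (negbTE hy).
by rewrite big1 // => y hy; case: eqP => // exy; rewrite exy hy in h.
Qed.

Lemma nn_bounded (E : pcomplex T k) i z : (clen E <= i)%N -> nn E i z = 0%N.
Proof.
move=> h; apply/eqP; rewrite -leqn0; apply: leq_trans (rank_leq_row _) _.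
by rewrite smd_bounded.
Qed.

Lemma rr_bounded (E : pcomplex T k) i z : (clen E <= i.+1)%N -> rr E i z = 0%N.
Proof.
move=> h; apply/eqP; rewrite -leqn0; apply: leq_trans (rank_leq_row _) _.
by rewrite smd_bounded.
Qed.

Lemma nn_count (E : pcomplex T k) i z :
  (nn E i z)%:Z = (\sum_(y : T | (y <= z)%O) cls E i y)%R.
Proof. by rewrite /nn mask_dmask rank_dmask count_sum_mem. Qed.

Lemma res_euler (E : pcomplex T k) (M : Pmodule T k) z :
  is_resolution E M -> (\sum_(y : T | (y <= z)%O) alpha_hat E y = (pdim M z)%:Z)%R.
Proof.
case=> v /(_ z) /res_iff [h1 h2 h3 h4].
have := @euler (fun i => nn E i z) (fun i => rr E i z) _ (clen E) h3 h4; rewrite h1 rr_bounded // mulr0 addr0.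
rewrite big_ord_recr /= nn_bounded // mulr0 addr0 => <-.
rewrite /alpha_hat exchange_big /=; apply: eq_bigr => i _.
by rewrite nn_count mulr_sumr.
Qed.

End Mx.

Section Cone.
Variables (disp : Order.disp_t) (T : finPOrderType disp) (k : fieldType).
Local Open Scope ring_scope.
Variable x : T.


Definition ext (bb : bool) (s : seq T) : seq T := if bb then x :: s else s.

Ltac norm := repeat match goal with
  | |- context [size (ext true ?s)] => change (size (ext true s)) with (1 + size s)%N
  | |- context [(size ?s).+1] => change ((size s).+1) with (1 + size s)%N end.

Definition extmx (b1 b0 : bool) (s1 s0 : seq T) (A : 'M[k]_(size s1, size s0)) :
    'M[k]_(size (ext b1 s1), size (ext b0 s0)) :=
  match b1 as c1, b0 as c0 return 'M[k]_(size (ext c1 s1), size (ext c0 s0)) with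
  | true, true => block_mx (1%:M : 'M_1) 0 0 A
  | true, false => col_mx (0 : 'M_(1, size s0)) A
  | false, true => row_mx (0 : 'M_(size s1, 1)) A
  | false, false => A
  end.

Definition extdiag (b : bool) (s : seq T) z (A : 'M[k]_(size s)) : 'M[k]_(size (ext b s)) :=
  match b as c return 'M_(size (ext c s)) with
  | true => block_mx (cmx k x z) 0 0 A
  | false => A end.

Definition extcol (b : bool) (s : seq T) p (A : 'M[k]_(size s, p)) : 'M[k]_(size (ext b s), p) :=
  match b as c return 'M_(size (ext c s), p) with
  | true => col_mx (0 : 'M_(1, p)) A
  | false => A end.

Lemma dmask_ext b s z : dmask k (ext b s) z = extdiag b z (dmask k s z).
Proof. by case: b => //; exact: dmask_cons. Qed.

Lemma rank_cmx z : \rank (cmx k x z) = (x <= z)%O.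
Proof.
rewrite /cmx; case: (x <= z)%O => /=; first by rewrite mxrank1.
by rewrite (_ : 0%:M = 0) ?mxrank0 //; apply/matrixP => ? ?; rewrite !mxE mul0rn.
Qed.

Lemma rank_extdiag b s z (A : 'M[k]_(size s)) :
  \rank (extdiag b z A) = ((b && (x <= z)%O) + \rank A)%N.
Proof. by case: b => //=; rewrite (rank_diag_block_mx (cmx k x z) A) rank_cmx. Qed.

Lemma rank_extmx b1 b0 s1 s0 z (V : 'M[k]_(size s1)) (A : 'M[k]_(size s1, size s0)) :
  \rank (extdiag b1 z V *m extmx b1 b0 A) = ([&& b1, b0 & (x <= z)%O] + \rank (V *m A))%N.
Proof.
case: b1; case: b0 => /=; norm.
- by rewrite mulmx_block !mulmx0 !mul0mx !addr0 !add0r mulmx1 rank_diag_block_mx rank_cmx.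
- by rewrite mul_block_col !mulmx0 !mul0mx !addr0 !add0r rank_col_0mx.
- by rewrite mul_mx_row mulmx0 rank_row_0mx.
- by [].
Qed.

Lemma mul3_ext b1 b0 s1 s0 p z (V : 'M[k]_(size s1)) (A : 'M[k]_(size s1, size s0))
   (B : 'M[k]_(size s0, p)) :
  extdiag b1 z V *m extmx b1 b0 A *m extcol b0 B = extcol b1 (V *m A *m B).
Proof.
case: b1; case: b0 => /=; norm.
- by rewrite mulmx_block !mulmx0 !mul0mx !addr0 !add0r mulmx1 mul_block_col !mulmx0 !mul0mx !addr0 !add0r.
- by rewrite mul_block_col !mulmx0 !mul0mx !addr0 !add0r mul_col_mx mul0mx.
- by rewrite mul_mx_row mulmx0 mul_row_col mulmx0 add0r.
- by [].
Qed.

Lemma rank_extcol b s z p (V : 'M[k]_(size s)) (B : 'M[k]_(size s, p)) :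
  \rank (extdiag b z V *m extcol b B) = \rank (V *m B).
Proof.
case: b => //=; norm.
by rewrite mul_block_col !mulmx0 !mul0mx !addr0 !add0r rank_col_0mx.
Qed.

Lemma extcol0 b s p : extcol b (0 : 'M[k]_(size s, p)) = 0.
Proof. by case: b => //=; rewrite col_mx0. Qed.

Lemma extmx_sq b2 b1 b0 s2 s1 s0 (A1 : 'M[k]_(size s2, size s1)) (A0 : 'M[k]_(size s1, size s0)) :
  ~~ [&& b2, b1 & b0] -> A1 *m A0 = 0 -> extmx b2 b1 A1 *m extmx b1 b0 A0 = 0.
Proof.
move=> hb hA; move: hb; case: b2; case: b1; case: b0 => //= _; norm;
rewrite ?mulmx_block ?mul_block_col ?mul_row_block ?mul_col_row ?mul_row_col
  ?mul_mx_row ?mul_col_mx ?mulmx0 ?mul0mx ?addr0 ?add0r ?hA ?block_mx0 ?col_mx0 ?row_mx0 //.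
Qed.


Lemma tnth_ext1 (s : seq T) (j : 'I_(1 + size s)) (j' : 'I_(size s)) :
  (j : nat) = (1 + j')%N -> tnth (in_tuple (ext true s)) j = tnth (in_tuple s) j'.
Proof. by move=> h; rewrite !(tnth_nth x) /= h. Qed.

Lemma tnth_ext0 (s : seq T) (j : 'I_(1 + size s)) :
  (j : nat) = 0%N -> tnth (in_tuple (ext true s)) j = x.
Proof. by move=> h; rewrite !(tnth_nth x) /= h. Qed.

Lemma extmx_supp b1 b0 s1 s0 (A : 'M[k]_(size s1, size s0)) :
  (forall j' j, A j' j != 0 -> (tnth (in_tuple s0) j <= tnth (in_tuple s1) j')%O) ->
  forall j' j, extmx b1 b0 A j' j != 0 ->
    (tnth (in_tuple (ext b0 s0)) j <= tnth (in_tuple (ext b1 s1)) j')%O.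
Proof.
move=> hA; case: b1; case: b0 => /=; norm => j' j; rewrite ?mxE.
- case: (splitP j') => a ha; rewrite ?mxE; case: (splitP j) => b hb; rewrite ?mxE.
  + have ha0 : (j' : nat) = 0%N by rewrite ha ord1.
    have hb0 : (j : nat) = 0%N by rewrite hb ord1.
    by rewrite (tnth_ext0 ha0) (tnth_ext0 hb0).
  + by rewrite eqxx.
  + by rewrite eqxx.
  + move=> h; have := hA _ _ h.
    by rewrite (tnth_ext1 ha) (tnth_ext1 hb).
- case: (splitP j') => a ha; rewrite ?mxE; first by rewrite eqxx.
  move=> h; have := hA _ _ h.
  by rewrite (tnth_ext1 ha).
- case: (splitP j) => b hb; rewrite ?mxE; first by rewrite eqxx.
  move=> h; have := hA _ _ h.
  by rewrite (tnth_ext1 hb).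
- exact: hA.
Qed.

Section Aug.
Variable M : Pmodule T k.

Definition augs (s : seq T) (v : forall j : 'I_(size s), 'rV[k]_(pdim M (tnth (in_tuple s) j))) z :
   'M[k]_(size s, pdim M z) :=
  \matrix_(j < size s, c < pdim M z)
    (if (tnth (in_tuple s) j <= z)%O then (v j *m Defs.pmap M (tnth (in_tuple s) j) z) 0 c else 0).

Definition extv b (s : seq T) (v : forall j : 'I_(size s), 'rV[k]_(pdim M (tnth (in_tuple s) j))) :
  forall j : 'I_(size (ext b s)), 'rV[k]_(pdim M (tnth (in_tuple (ext b s)) j)) :=
  match b as c return forall j : 'I_(size (ext c s)), 'rV[k]_(pdim M (tnth (in_tuple (ext c s)) j)) with
  | true => fun j => match unlift (@ord0 (size s)) j with
                     | Some j' => conform_mx 0 (v j')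
                     | None => 0 end
  | false => v end.

Lemma conf_aug z (t1 t2 : T) (e : t1 = t2) (w : 'rV[k]_(pdim M t1)) c :
  (if (t2 <= z)%O then (conform_mx (0 : 'rV_(pdim M t2)) w *m Defs.pmap M t2 z) 0 c else 0)
  = (if (t1 <= z)%O then (w *m Defs.pmap M t1 z) 0 c else 0).
Proof. by subst; rewrite conform_mx_id. Qed.

Lemma tnth_lift (s : seq T) (j' : 'I_(size s)) :
  tnth (in_tuple (ext true s)) (lift (@ord0 (size s)) j') = tnth (in_tuple s) j'.
Proof. by rewrite !(tnth_nth x). Qed.

Lemma augs_ext b (s : seq T) (v : forall j : 'I_(size s), 'rV[k]_(pdim M (tnth (in_tuple s) j))) z : augs (extv (b:=b) v) z = extcol b (augs v z).
Proof.
case: b => //=; apply/matrixP => j c; rewrite mxE.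
case: (unliftP (@ord0 (size s)) j) => [j'|] ->.
- rewrite (conf_aug (esym (tnth_lift j')) (v j') c).
  have -> : lift (@ord0 (size s)) j' = rshift 1 j' by apply: val_inj.
  by rewrite (col_mxEd (0 : 'M_(1, pdim M z)) (augs v z)) /augs !mxE.
- rewrite mul0mx mxE if_same.
  have -> : (@ord0 (size s)) = lshift (size s) (@ord0 0) by apply: val_inj.
  by rewrite (col_mxEu (0 : 'M_(1, pdim M z)) (augs v z)) /augs !mxE.
Qed.

End Aug.

Section AddCone.
Variables (E : pcomplex T k) (a : nat).

Definition bb i := (i == a) || (i == a.+1).
Definition smd' i := ext (bb i) (smd E i).
Definition dif' i : 'M[k]_(size (smd' i.+1), size (smd' i)) := extmx (bb i.+1) (bb i) (dif E i).

Lemma bnd' i : (maxn (clen E) a.+2 <= i)%N -> smd' i = [::].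
Proof.
rewrite geq_max => /andP[h1 h2].
by rewrite /smd' (_ : bb i = false) ?smd_bounded //; rewrite /bb; lia.
Qed.

Lemma supp' i j' j : dif' i j' j != 0 ->
  (tnth (in_tuple (smd' i)) j <= tnth (in_tuple (smd' i.+1)) j')%O.
Proof. move=> h; exact: (extmx_supp (@dif_supp _ _ _ E i) h). Qed.

Lemma sq' i : dif' i.+1 *m dif' i = 0.
Proof. by apply: extmx_sq; [rewrite /bb; lia | exact: dif_sq]. Qed.

Definition addcone : pcomplex T k :=
  {| clen := maxn (clen E) a.+2; smd := smd'; dif := dif';
     smd_bounded := bnd'; dif_supp := supp'; dif_sq := sq' |}.

Lemma mask_addcone i z : Defs.mask addcone i z = extdiag (bb i) z (Defs.mask E i z).
Proof. exact: dmask_ext. Qed.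

Lemma dif_addcone i : dif addcone i = extmx (bb i.+1) (bb i) (dif E i).
Proof. by []. Qed.

Lemma cls_addcone i y : cls addcone i y = (cls E i y + cone_cls x a i y)%R.
Proof.
rewrite /cls /cone_cls /= /smd' /bb /ext.
case: ifP => hb /=; last by rewrite andbF addr0.
by rewrite andbT eq_sym PoszD addrC.
Qed.

Lemma res_addcone (M : Pmodule T k) : is_resolution E M -> is_resolution addcone M.
Proof.
case=> v hv; exists (extv (b:=bb 0) v) => z.
have /res_iff [h1 h2 h3 h4] := hv z.
have eaug : aug_at (E := addcone) (extv (b:=bb 0) v) z = extcol (bb 0) (aug_at v z).
  exact: augs_ext.
apply/res_iff; split.
- by rewrite mask_addcone eaug rank_extcol h1.
- by rewrite mask_addcone dif_addcone eaug mul3_ext h2 extcol0.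
- move: h3; rewrite /rr /nn !mask_addcone dif_addcone eaug rank_extcol rank_extmx rank_extdiag.
  by case: (x <= z)%O; rewrite /bb /=; lia.
- move=> i; have := h4 i; rewrite /rr /nn !mask_addcone !dif_addcone !rank_extmx rank_extdiag.
  by case: (x <= z)%O; rewrite /bb /=; lia.
Qed.

End AddCone.

End Cone.


Section Part1.
Variables (disp : Order.disp_t) (T : finPOrderType disp) (k : fieldType).

Lemma count_sum_tnth (s : seq T) y :
  count_mem y s = (\sum_(j < size s) (tnth (in_tuple s) j == y))%N.
Proof.
elim: s => [|x s IH]; first by rewrite big_ord0.
rewrite /= big_ord_recl /= IH; congr (_ + _)%N.
by apply: eq_bigr => j _; rewrite !(tnth_nth x).
Qed.

Lemma bij_count (s1 s2 : seq T) (f : 'I_(size s1) -> 'I_(size s2)) :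
  bijective f -> (forall j, tnth (in_tuple s2) (f j) = tnth (in_tuple s1) j) ->
  perm_eq s1 s2.
Proof.
move=> bf hf; apply/allP => y _; apply/eqP.
rewrite !count_sum_tnth (reindex f) /=; last exact: onW_bij.
by apply: eq_bigr => j _; rewrite hf.
Qed.

Lemma perm_bij (s1 s2 : seq T) : perm_eq s1 s2 ->
  exists f : 'I_(size s1) -> 'I_(size s2),
    bijective f /\ (forall j, tnth (in_tuple s2) (f j) = tnth (in_tuple s1) j).
Proof.
move=> hp; have e := perm_size hp.
move: hp => /(@tuple_permP _ _ _ (in_tuple s2)) [p hp].
exists (fun j => p (cast_ord e j)); split.
- apply: (@inj_card_bij _ _ (fun j => p (cast_ord e j))); last by rewrite !card_ord e.
  by move=> j1 j2 /perm_inj /cast_ord_inj.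
- move=> j.
  have h := congr1 (fun s => nth (tnth (in_tuple s2) (p (cast_ord e j))) s j) hp.
  rewrite (tnth_nth (tnth (in_tuple s2) (p (cast_ord e j))) (in_tuple s1) j) /= h.
  by rewrite (_ : (j : nat) = cast_ord e j) // -tnth_nth tnth_mktuple.
Qed.


Lemma cls_perm (E F : pcomplex T k) : cls E = cls F -> forall i, perm_eq (smd E i) (smd F i).
Proof.
move=> h i; apply/allP => y _ /=; apply/eqP; have := congr1 (fun f => f i y) h.
by rewrite /cls => [[->]].
Qed.

Lemma perm_cls (E F : pcomplex T k) : (forall i, perm_eq (smd E i) (smd F i)) -> cls E = cls F.
Proof.
move=> h; apply/funext => i; apply/funext => y.
by rewrite /cls (seq.permP (h i)).
Qed.

Variables (R : realType) (d : T -> T -> R) (hd : is_metric d).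
Local Open Scope ring_scope.

Lemma d0_eq x y : d x y = 0 -> x = y.
Proof. by case: hd => h0 _ _; move/h0. Qed.

Lemma dxx x : d x x = 0.
Proof. by case: hd => h0 _ _; apply/h0. Qed.

Lemma d_ge0 x y : 0 <= d x y.
Proof.
case: hd => h0 hs ht; have := ht x y x.
by rewrite (hs y x) (dxx x) => h; lra.
Qed.

Definition delta : R := \big[Num.min/1]_(p : T * T | p.1 != p.2) d p.1 p.2.

Lemma delta_gt0 : 0 < delta.
Proof.
rewrite /delta; apply: (big_ind (fun r => 0 < r)) => //.
- by move=> a b ha hb; rewrite lt_min ha hb.
- case=> a b /= hab; rewrite lt_def d_ge0 andbT.
  by apply/eqP => /d0_eq e; rewrite e eqxx in hab.
Qed.

Lemma bigmin_le (I : eqType) (r : seq I) (P : pred I) (F : I -> R) (i : I) :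
  i \in r -> P i -> \big[Num.min/1]_(j <- r | P j) F j <= F i.
Proof.
elim: r => // a r IH; rewrite inE big_cons; case/orP => [/eqP <-|hi] hP.
  by rewrite hP ge_min lexx.
by case: ifP => _; [rewrite ge_min (IH hi hP) orbT | exact: IH].
Qed.

Lemma delta_le x y : x != y -> delta <= d x y.
Proof.
move=> h; rewrite /delta; apply: (@bigmin_le _ _ _ (fun p => d p.1 p.2) (x, y)) => //.
by rewrite mem_index_enum.
Qed.

Lemma max_cases (P : R -> Prop) a b : P a -> P b -> P (Num.max a b).
Proof. by move=> ha hb; rewrite maxEle; case: ifP. Qed.

Lemma cost_cases (E F : pcomplex T k) (B : prematching E F) :
  cost d B = 0 \/ delta <= cost d B.
Proof.
rewrite /cost; apply: (big_ind (fun r => r = 0 \/ delta <= r)); first by left.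
  by move=> a b ha hb; exact: (@max_cases (fun r => r = 0 \/ delta <= r) a b ha hb).
move=> i _; apply: (big_ind (fun r => r = 0 \/ delta <= r)); first by left.
  by move=> a b ha hb; exact: (@max_cases (fun r => r = 0 \/ delta <= r) a b ha hb).
move=> j _; case: (eqVneq (sm j) (sm (B i j))) => h.
  by left; rewrite h (dxx _).
by right; apply: delta_le.
Qed.

Lemma cost_ge0 (E F : pcomplex T k) (B : prematching E F) : 0 <= cost d B.
Proof. by case: (cost_cases B) => [->//|h]; apply: le_trans h; apply: ltW delta_gt0. Qed.

Lemma term_le_cost (E F : pcomplex T k) (B : prematching E F) i (hi : (i < clen E)%N) j :
  d (sm j) (sm (B i j)) <= cost d B.
Proof.
rewrite /cost (bigD1 (Ordinal hi)) //= le_max; apply/orP; left.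
by rewrite (bigD1 j) //= le_max lexx.
Qed.

Lemma zero_cost_iff (E F : pcomplex T k) :
  (exists B : prematching E F, is_prematching B /\ cost d B = 0) <-> cls E = cls F.
Proof.
split.
- case=> B [hB hc]; apply: perm_cls => i.
  case: (ltnP i (clen E)) => hi.
  + apply: (bij_count (hB i)) => j.
    have := term_le_cost B hi j; rewrite hc => h.
    have h0 : d (sm j) (sm (B i j)) = 0 by apply/le_anti; rewrite h d_ge0.
    by have := d0_eq h0; rewrite /sm => ->.
  + have := bij_eq_card (hB i); rewrite !card_ord => e.
    move: e; rewrite (smd_bounded hi) /= => /esym/size0nil ->.
    by [].
- move=> h; have hp := cls_perm h.
  have hex i := perm_bij (hp i).
  pose B : prematching E F := fun i => sval (cid (hex i)).
  exists B; split.
  + by move=> i; exact: (proj1 (svalP (cid (hex i)))).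
  + rewrite /cost; apply: (big_ind (fun r => r = 0)) => //.
      by move=> a b -> ->; rewrite maxxx.
    move=> i _; apply: (big_ind (fun r => r = 0)) => //.
      by move=> a b -> ->; rewrite maxxx.
    move=> j _; rewrite /sm (proj2 (svalP (cid (hex i))) j).
    exact: (dxx _).
Qed.

Local Open Scope ereal_scope.
Local Open Scope classical_set_scope.

Lemma distR'_ge0 (E F : pcomplex T k) : 0 <= distR' d E F.
Proof. by apply/ereal_infP => y [B _ <-]; rewrite lee_fin cost_ge0. Qed.

Lemma distR'_ge (E F : pcomplex T k) :
  ~ (exists B : prematching E F, is_prematching B /\ cost d B = 0%R) ->
  delta%:E <= distR' d E F.
Proof.
move=> hn; apply/ereal_infP => y [B hB <-]; rewrite lee_fin.
by case: (cost_cases B) => // h0; exfalso; apply: hn; exists B.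
Qed.

Lemma distR'0_iff (E F : pcomplex T k) :
  distR' d E F = 0 <-> exists B : prematching E F, is_prematching B /\ cost d B = 0%R.
Proof.
split.
- move=> h; apply: contrapT => hn; have := distR'_ge hn.
  by rewrite h lee_fin => /(lt_le_trans delta_gt0); rewrite ltxx.
- case=> B [hB hc]; apply/le_anti; rewrite distR'_ge0 andbT.
  by apply: ereal_inf_lbound; exists B => //; rewrite hc.
Qed.

Lemma distR'_le (E F : pcomplex T k) : distR' d E F <= distR d E F.
Proof.
by apply/ereal_infP => y [B [hB _] <-]; apply: ereal_inf_lbound; exists B.
Qed.

Lemma distB'_le (M N : Pmodule T k) : distB' d M N <= distB d M N.
Proof.
apply/ereal_infP => y [EF hEF <-]; apply: le_trans (distR'_le _ _).
by apply: ereal_inf_lbound; exists EF.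
Qed.

Lemma distB'0_iff (M N : Pmodule T k) :
  distB' d M N = 0 <->
  exists (E F : pcomplex T k),
    [/\ is_resolution E M, is_resolution F N,
        forall i, size (smd E i) = size (smd F i) &
        exists B : prematching E F, is_prematching B /\ cost d B = 0%R].
Proof.
split.
- move=> h; apply: contrapT => hn.
  have : delta%:E <= distB' d M N.
    apply/ereal_infP => y [[E F] [h1 h2 h3] <-] /=; apply: distR'_ge => hB.
    by apply: hn; exists E, F; split.
  by rewrite h lee_fin => /(lt_le_trans delta_gt0); rewrite ltxx.
- case=> E [F [h1 h2 h3 h4]]; apply/le_anti; apply/andP; split.
    apply: ereal_inf_lbound; exists (E, F) => //.
    exact: (proj2 (distR'0_iff E F) h4).
  by apply/ereal_infP => y [EF _ <-]; apply: distR'_ge0.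
Qed.

End Part1.

Section Part2.
Variables (disp : Order.disp_t) (T : finPOrderType disp) (k : fieldType).
Local Open Scope ring_scope.

Lemma mobius (f : T -> int) : (forall z, \sum_(x | (x <= z)%O) f x = 0) -> forall z, f z = 0.
Proof.
move=> h z; move: (leqnn #|[pred y | (y < z)%O]|).
move: {2}#|[pred y | (y < z)%O]| => n.
elim: n z => [|n IH] z hz;
  (suff hlt : forall x, (x < z)%O -> f x = 0 by
    have := h z; rewrite (bigD1 z) //= big1 ?addr0 // => x /andP[hx1 hx2];
    apply: hlt; rewrite lt_neqAle hx2 hx1).
- move=> x hx; exfalso; move: hz; rewrite leqn0 => /eqP /card0_eq /(_ x).
  by rewrite !inE hx.
- move=> x hx; apply: IH; rewrite -ltnS; apply: leq_trans hz; apply: proper_card.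
  apply/properP; split.
    by apply/fintype.subsetP => y; rewrite !inE => hy; exact: lt_trans hy hx.
  by exists x; rewrite !inE ?hx ?ltxx.
Qed.

Lemma cls_bounded (E : pcomplex T k) i y : (clen E <= i)%N -> cls E i y = 0.
Proof. by move=> h; rewrite /cls smd_bounded. Qed.

Lemma alpha_ext (E : pcomplex T k) N y : (clen E <= N)%N ->
  alpha_hat E y = \sum_(i < N) (-1) ^+ i * cls E i y.
Proof.
move=> h; rewrite /alpha_hat (big_ord_widen N (fun i => (-1) ^+ i * cls E i y) h).
rewrite big_mkcond /=; apply: eq_bigr => i _; case: ifP => // /negbT.
by rewrite -leqNgt => hi; rewrite cls_bounded // mulr0.
Qed.

Lemma alpha_cls (E F : pcomplex T k) : cls E = cls F -> alpha_hat E = alpha_hat F.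
Proof.
move=> h; apply/funext => y.
rewrite (@alpha_ext E (maxn (clen E) (clen F))) ?leq_maxl //.
by rewrite (@alpha_ext F (maxn (clen E) (clen F))) ?leq_maxr // h.
Qed.

Definition addcones (E : pcomplex T k) (l : seq (T * nat)) : pcomplex T k :=
  foldr (fun p F => addcone p.1 F p.2) E l.

Lemma res_addcones (E : pcomplex T k) M l : is_resolution E M -> is_resolution (addcones E l) M.
Proof. by elim: l => //= p l IH h; apply: res_addcone; exact: IH. Qed.

Lemma cls_addcones (E : pcomplex T k) l i y :
  cls (addcones E l) i y = cls E i y + \sum_(p <- l) cone_cls p.1 p.2 i y.
Proof.
elim: l => [|p l IH]; first by rewrite big_nil addr0.
by rewrite /= cls_addcone IH big_cons; ring.
Qed.

Lemma sum_nseq n (q : T * nat) (F : T * nat -> int) :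
  \sum_(r <- nseq n q) F r = n%:Z * F q.
Proof.
elim: n => [|n IH]; first by rewrite big_nil mul0r.
by rewrite /= big_cons IH -[n.+1]addn1 PoszD mulrDl mul1r addrC.
Qed.

Definition lsel (b : bool) (l : seq (int * (T * nat))) : seq (T * nat) :=
  flatten [seq nseq (absz p.1) p.2 | p <- l & (p.1 < 0) == b].

Lemma sum_lsel b l i y :
  \sum_(q <- lsel b l) cone_cls q.1 q.2 i y =
  \sum_(p <- l | (p.1 < 0) == b) (absz p.1)%:Z * cone_cls p.2.1 p.2.2 i y.
Proof.
elim: l => [|p l IH]; first by rewrite /lsel !big_nil.
rewrite big_cons -IH /lsel /=; case: ifP => _ //=.
by rewrite big_cat sum_nseq.
Qed.

Lemma split_l l i y :
  \sum_(p <- l) p.1 * cone_cls p.2.1 p.2.2 i y =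
  \sum_(q <- lsel false l) cone_cls q.1 q.2 i y - \sum_(q <- lsel true l) cone_cls q.1 q.2 i y.
Proof.
rewrite !sum_lsel (bigID (fun p => p.1 < 0)) /= addrC; congr (_ + _).
- apply: eq_big => [p|p]; first by case: (p.1 < 0).
  move=> hp; rewrite gez0_abs // leNgt; exact: hp.
- rewrite -sumrN; apply: eq_big => [p|p]; first by case: (p.1 < 0).
  by move=> hp; rewrite ltz0_abs // mulNr opprK.
Qed.

Lemma cone_gen N (f : nat -> T -> int) :
  (forall i y, (N < i)%N -> f i y = 0) ->
  (forall y, \sum_(i < N.+1) (-1) ^+ i * f i y = 0) -> in_cone_subgroup f.
Proof.
elim: N f => [|N IH] f hsup hsum.
  exists [::]; apply/funext => i; apply/funext => y; rewrite big_nil.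
  case: i => [|i]; last by apply: hsup.
  by have := hsum y; rewrite big_ord1 expr0 mul1r.
pose g i y := f i y - f N.+1 y * cone_cls y N i y.
have [l hl] : in_cone_subgroup g.
  apply: IH.
  - move=> i y hi; rewrite /g /cone_cls eqxx /=.
    case: (eqVneq i N.+1) => [->|ne]; first by rewrite orbT mulr1 subrr.
    have -> : (i == N) = false by lia.
    by rewrite hsup ?orbF ?mulr0 ?subr0 //; lia.
  - move=> y; have := hsum y; rewrite big_ord_recr /= => h.
    rewrite /g; under eq_bigr => i _ do rewrite mulrBr; rewrite sumrB.
    rewrite [X in _ - X = _]big_ord_recr /= [X in _ - (X + _) = _]big1; last first.
      move=> i _; rewrite /cone_cls eqxx /=.
      have -> : ((i : nat) == N) || ((i : nat) == N.+1) = false.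
        by have := ltn_ord i; lia.
      by rewrite mulr0 mulr0.
    rewrite /cone_cls !eqxx /= mulr1 add0r.
    move: h; rewrite exprS mulN1r mulNr => /eqP; rewrite addr_eq0 opprK => /eqP ->.
    by rewrite subrr.
exists (l ++ [seq (f N.+1 y, (y, N)) | y <- enum T]).
apply/funext => i; apply/funext => y'.
have := congr1 (fun h => h i y') hl; rewrite /g /= => e.
rewrite big_cat /= -e big_map big_enum /= (bigD1 y') //= big1; last first.
  move=> y hy; rewrite /cone_cls eq_sym (negbTE hy) /=; exact: mulr0.
by rewrite addr0 subrK.
Qed.

End Part2.


Lemma b_to_d (disp : Order.disp_t) (T : finPOrderType disp) (k : fieldType)
  (R : realType) (d : T -> T -> R) (hd : is_metric d)
  (M N : Pmodule T k) (PM PN : pcomplex T k) :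
  is_resolution PM M -> is_resolution PN N ->
  (exists (E F : pcomplex T k),
        [/\ is_resolution E M, is_resolution F N,
            forall i, size (smd E i) = size (smd F i) &
            exists B : prematching E F, is_prematching B /\ cost d B = 0%R]) ->
  alpha_hat PM = alpha_hat PN.
Proof.
move=> hPM hPN [E [F [hE hF _ hB]]].
have hcls := proj1 (zero_cost_iff hd E F) hB.
have hEF := alpha_cls hcls.
have h0 : forall z, (\sum_(x | (x <= z)%O) (alpha_hat PM x - alpha_hat PN x) = 0)%R.
  move=> z; rewrite GRing.sumrB (res_euler z hPM) (res_euler z hPN).
  by rewrite -(res_euler z hE) -(res_euler z hF) hEF GRing.subrr.
apply/funext => y; apply/eqP; rewrite -GRing.subr_eq0; apply/eqP; exact: (mobius h0).
Qed.

Lemma d_to_c (disp : Order.disp_t) (T : finPOrderType disp) (k : fieldType)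
  (PM PN : pcomplex T k) :
  alpha_hat PM = alpha_hat PN ->
  in_cone_subgroup (fun i x => (cls PM i x - cls PN i x)%R).
Proof.
move=> h; apply: (@cone_gen _ _ (maxn (clen PM) (clen PN))).
- move=> i y hi; rewrite !cls_bounded ?GRing.subrr //.
  + by apply: leq_trans (ltnW hi); rewrite leq_maxr.
  + by apply: leq_trans (ltnW hi); rewrite leq_maxl.
- move=> y; under eq_bigr => i _ do rewrite GRing.mulrBr.
  rewrite GRing.sumrB -!alpha_ext ?h ?GRing.subrr //.
  + by apply: leq_trans (leqnSn _); rewrite leq_maxr.
  + by apply: leq_trans (leqnSn _); rewrite leq_maxl.
Qed.

Lemma c_to_b (disp : Order.disp_t) (T : finPOrderType disp) (k : fieldType)
  (R : realType) (d : T -> T -> R) (hd : is_metric d)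
  (M N : Pmodule T k) (PM PN : pcomplex T k) :
  is_resolution PM M -> is_resolution PN N ->
  in_cone_subgroup (fun i x => (cls PM i x - cls PN i x)%R) ->
  (exists (E F : pcomplex T k),
        [/\ is_resolution E M, is_resolution F N,
            forall i, size (smd E i) = size (smd F i) &
            exists B : prematching E F, is_prematching B /\ cost d B = 0%R]).
Proof.
move=> hPM hPN [l hl].
pose E := addcones PM (lsel true l); pose F := addcones PN (lsel false l).
have hEF : cls E = cls F.
  apply/funext => i; apply/funext => y.
  have := congr1 (fun h => h i y) hl => /= e.
  rewrite !cls_addcones -[cls PM i y](GRing.subrK (cls PN i y)) e split_l.
  ring.
exists E, F; split.
- exact: res_addcones.
- exact: res_addcones.
- by move=> i; apply: perm_size; apply: cls_perm.
- exact: (proj2 (zero_cost_iff hd E F) hEF).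
Qed.

Unset Implicit Arguments.
Theorem lemma4p10 (R : realType) (disp : Order.disp_t) (T : finPOrderType disp)
    (k : fieldType) (d : T -> T -> R) (hd : is_metric d) :
  (* (1) *)
  (forall E F : pcomplex T k,
     (distR' d E F = 0%E <->
      exists B : prematching E F, is_prematching B /\ cost d B = 0%R) /\
     ((exists B : prematching E F, is_prematching B /\ cost d B = 0%R) <->
      cls E = cls F)) /\
  (* (2) *)
  (forall (M N : Pmodule T k) (PM PN : pcomplex T k),
     is_min_resolution PM M -> is_min_resolution PN N ->
     (distB' d M N = 0%E <->
      exists (E F : pcomplex T k),
        [/\ is_resolution E M, is_resolution F N,
            forall i, size (smd E i) = size (smd F i) &
            exists B : prematching E F, is_prematching B /\ cost d B = 0%R]) /\
     ((exists (E F : pcomplex T k),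
        [/\ is_resolution E M, is_resolution F N,
            forall i, size (smd E i) = size (smd F i) &
            exists B : prematching E F, is_prematching B /\ cost d B = 0%R]) <->
      in_cone_subgroup (fun i x => (cls PM i x - cls PN i x)%R)) /\
     (in_cone_subgroup (fun i x => (cls PM i x - cls PN i x)%R) <->
      alpha_hat PM = alpha_hat PN) /\
     (* in particular *)
     (distB d M N = 0%E -> alpha_hat PM = alpha_hat PN)).
Proof.
split.
  by move=> E F; split; [exact: distR'0_iff | exact: zero_cost_iff].
move=> M N PM PN [hPM _] [hPN _]; split; first exact: distB'0_iff.
split.
  split; first by move=> hb; apply: d_to_c; exact: (b_to_d hd hPM hPN hb).
  exact: (c_to_b hd hPM hPN).
split.
  split; last exact: d_to_c.
  by move=> hc; apply: (b_to_d hd hPM hPN); exact: (c_to_b hd hPM hPN hc).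
move=> h; apply: (b_to_d hd hPM hPN); apply/(distB'0_iff hd).
apply/le_anti; apply/andP; split; first by rewrite -h distB'_le.
by apply/ereal_infP => y [EF _ <-]; apply: distR'_ge0.
Qed.
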